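(* Let $G$ be a multiplicatively written Abelian group with identity $e$, $\phi$ a height on $G$, $\alpha\in G$, and $a\ge0$. Suppose there is a set $S\subseteq G$ containing $e$ with $\phi(S)$ finite such that $S$ replaces $G$ at every $t\in(a,\infty)$. Then there exist $s\in[a,\infty)$ and $\mathbf M\in\mathbb R^\infty$ such that $\phi_t(\alpha)=\|\mathbf M\|_t$ for all $t\in(s,\infty)$. Consequently there is a finite set $\mathcal X\subseteq\mathbb R^\infty$ with $\phi_t(\alpha)=\min\{\|\mathbf x\|_t:\mathbf x\in\mathcal X\}$ for all $t\in(a,\infty)$.
   Context: A height on $G$ is a map $\phi:G\to[0,\infty)$ with $\phi(e)=0$ and $\phi(\beta)=\phi(\beta^{-1})$. For $S\ni e$, $S^\infty$ is the set of sequences in $S$ with all but finitely many terms equal to $e$. $\mathbb R^\infty$ is the set of finitely supported real sequences, $\|\mathbf x\|_t=(\sum_n|x_n|^t)^{1/t}$. $\phi_t(\alpha)=\inf\{\|(\phi(\alpha_1),\phi(\alpha_2),\ldots)\|_t:(\alpha_n)\in G^\infty,\ \prod_n\alpha_n=\alpha\}$. $S$ replaces $G$ at $t$ if $\phi_t(\alpha)$ equals the same infimum restricted to sequences in $S^\infty$ with product $\alpha$. *)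

(* Defs.v *)
From Stdlib Require Import Reals Lra List ClassicalEpsilon.
Open Scope R_scope.

Record AbGroup := {
  carrier :> Type;
  gmul : carrier -> carrier -> carrier;
  ginv : carrier -> carrier;
  gid : carrier;
  gmulA : forall x y z, gmul x (gmul y z) = gmul (gmul x y) z;
  gmulC : forall x y, gmul x y = gmul y x;
  gmul1 : forall x, gmul gid x = x;
  gmulV : forall x, gmul (ginv x) x = gid
}.

Definition is_height (G : AbGroup) (phi : G -> R) : Prop :=
  phi (gid G) = 0 /\ (forall b, 0 <= phi b) /\ (forall b, phi b = phi (ginv G b)).

Fixpoint gprod (G : AbGroup) (a : nat -> G) (N : nat) : G :=
  match N with
  | O => gid G
  | S k => gmul G (gprod G a k) (a k)
  end.

(* x^t for x >= 0, t > 0 (with 0^t = 0). *)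
Definition rpow (x t : R) : R :=
  if Rlt_dec 0 x then Rpower x t else 0.

Fixpoint rsum (f : nat -> R) (N : nat) : R :=
  match N with O => 0 | S k => rsum f k + f k end.

(* ||x||_t for a real sequence x supported in {0,...,N-1}. *)
Definition lp_norm (t : R) (x : nat -> R) (N : nat) : R :=
  rpow (rsum (fun n => rpow (Rabs (x n)) t) N) (1 / t).

Definition decomp_vals (G : AbGroup) (phi : G -> R) (S : G -> Prop)
    (t : R) (alpha : G) (v : R) : Prop :=
  exists (a : nat -> G) (N : nat),
    (forall n, S (a n)) /\
    (forall n, (N <= n)%nat -> a n = gid G) /\
    gprod G a N = alpha /\
    v = lp_norm t (fun n => phi (a n)) N.

Definition is_lower_bound (E : R -> Prop) (m : R) : Prop :=
  forall x, E x -> m <= x.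
Definition is_glb (E : R -> Prop) (m : R) : Prop :=
  is_lower_bound E m /\ (forall b, is_lower_bound E b -> b <= m).

(* Infimum (classical choice; only meaningful when a glb exists). *)
Definition Rinf (E : R -> Prop) : R :=
  proj1_sig (constructive_indefinite_description (fun m => is_glb E m \/ ~ (exists m', is_glb E m'))
    (match classic (exists m', is_glb E m') with
     | or_introl H => let (m, Hm) := H in ex_intro _ m (or_introl Hm)
     | or_intror H => ex_intro _ 0 (or_intror H)
     end)).

Definition phi_t (G : AbGroup) (phi : G -> R) (t : R) (alpha : G) : R :=
  Rinf (decomp_vals G phi (fun _ => True) t alpha).

Definition replaces (G : AbGroup) (phi : G -> R) (S : G -> Prop) (t : R) (alpha : G) : Prop :=
  is_glb (decomp_vals G phi S t alpha) (phi_t G phi t alpha).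

(* Main.v *)
Require Import Defs.
From Stdlib Require Import Reals List Lra Lia Classical.
Open Scope R_scope.

Lemma rpow_nonneg x t : 0 <= rpow x t.
Proof. unfold rpow; destruct (Rlt_dec 0 x). unfold Rpower; left; apply exp_pos. lra. Qed.

Lemma rpow_nonpos x t : x <= 0 -> rpow x t = 0.
Proof. intros; unfold rpow; destruct (Rlt_dec 0 x); lra. Qed.

Lemma rpow_le_base x y s : 0 <= x <= y -> 0 < s -> rpow x s <= rpow y s.
Proof.
  intros Hx Hs. destruct (Rle_lt_or_eq_dec 0 x (proj1 Hx)) as [H|H].
  - unfold rpow. destruct (Rlt_dec 0 x); [|lra]. destruct (Rlt_dec 0 y); [|lra].
    apply Rle_Rpower_l; lra.
  - subst. rewrite rpow_nonpos by lra. apply rpow_nonneg.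
Qed.

Definition Esum (l : list (R*R)) (t : R) : R :=
  fold_right (fun p acc => fst p * rpow (snd p) t + acc) 0 l.
Definition maxb (l : list (R*R)) : R := fold_right (fun p m => Rmax (snd p) m) 0 l.
Definition csum (l : list (R*R)) : R := fold_right (fun p m => fst p + m) 0 l.
Definition acsum (l : list (R*R)) : R := fold_right (fun p m => Rabs (fst p) + m) 0 l.

Lemma maxb_ge l p : In p l -> snd p <= maxb l.
Proof. induction l; simpl; intros H; [contradiction|]. destruct H; subst.
  apply Rmax_l. eapply Rle_trans; [apply IHl; auto| apply Rmax_r]. Qed.
Lemma maxb_nonneg l : 0 <= maxb l.
Proof. induction l; simpl; [lra|]. eapply Rle_trans; [apply IHl|apply Rmax_r]. Qed.
Lemma maxb_att l : l <> nil -> (forall p, In p l -> 0 <= snd p) -> exists p, In p l /\ snd p = maxb l.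
Proof.
  induction l as [|q l IH]; intros Hn Hpos; [congruence|]. simpl.
  destruct (Rle_dec (maxb l) (snd q)).
  - exists q; split; [left; auto|]. rewrite Rmax_left; auto.
  - destruct l as [|q' l'].
    + simpl in n. exfalso. specialize (Hpos q (or_introl eq_refl)). lra.
    + destruct IH as [p [Hp Hp2]]. congruence. intros; apply Hpos; right; auto.
      exists p; split; [right; auto|]. rewrite Rmax_right; lra.
Qed.

Lemma Esum_zero l t : (forall p, In p l -> snd p <= 0) -> Esum l t = 0.
Proof. induction l; simpl; intros; auto. rewrite rpow_nonpos, IHl; auto; lra. Qed.

Lemma Esum_filter (f : R*R -> bool) l t : Esum l t = Esum (filter f l) t + Esum (filter (fun x => negb (f x)) l) t.
Proof. induction l; simpl; [lra|]. destruct (f a); simpl; rewrite IHl; lra. Qed.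

Lemma Esum_const l t B : (forall p, In p l -> snd p = B) -> Esum l t = csum l * rpow B t.
Proof. induction l; simpl; intros H; [lra|]. rewrite H by auto. rewrite IHl by auto. lra. Qed.

Lemma Esum_bound l t b : (forall p, In p l -> 0 <= snd p <= b) -> 0 < t -> Rabs (Esum l t) <= acsum l * rpow b t.
Proof.
  induction l; simpl; intros H Ht. rewrite Rabs_R0; lra.
  eapply Rle_trans; [apply Rabs_triang|]. rewrite Rabs_mult.
  rewrite (Rabs_right (rpow _ _)) by (apply Rle_ge, rpow_nonneg).
  assert (rpow (snd a) t <= rpow b t) by (apply rpow_le_base; auto).
  assert (Rabs (Esum l t) <= acsum l * rpow b t) by auto.
  pose proof (Rabs_pos (fst a)). nra.
Qed.

Lemma acsum_nonneg l : 0 <= acsum l.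
Proof. induction l; simpl; [lra|]. pose proof (Rabs_pos (fst a)); lra. Qed.

Lemma exp_dom C K b B : 0 <= C -> K <> 0 -> 0 <= b < B ->
  exists s, 0 <= s /\ forall t, s < t -> C * rpow b t <= Rabs K * rpow B t.
Proof.
  intros HC HK Hb.
  destruct (Rle_lt_or_eq_dec 0 b (proj1 Hb)) as [Hb0|Hb0].
  - assert (HK' : 0 < Rabs K) by (apply Rabs_pos_lt; auto).
    assert (Hl : ln b < ln B) by (apply ln_increasing; lra).
    exists (Rmax 0 ((ln (C+1) - ln (Rabs K)) / (ln B - ln b))). split; [apply Rmax_l|].
    intros t Ht. unfold rpow. destruct (Rlt_dec 0 b); [|lra]. destruct (Rlt_dec 0 B); [|lra].
    unfold Rpower.
    assert (Ht2 : (ln (C+1) - ln (Rabs K)) / (ln B - ln b) < t).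
    { eapply Rle_lt_trans; [apply Rmax_r|exact Ht]. }
    assert (Ht3 : ln (C+1) - ln (Rabs K) < t * (ln B - ln b)).
    { apply (Rmult_lt_compat_r (ln B - ln b)) in Ht2; [|lra].
      unfold Rdiv in Ht2. rewrite Rmult_assoc, Rinv_l, Rmult_1_r in Ht2 by lra. lra. }
    assert (exp (ln (C+1) + t * ln b) < exp (ln (Rabs K) + t * ln B)) by (apply exp_increasing; lra).
    rewrite !exp_plus, !exp_ln in H by lra.
    pose proof (exp_pos (t * ln b)). nra.
  - subst. exists 0. split; [lra|]. intros. rewrite (rpow_nonpos 0) by lra.
    pose proof (rpow_nonneg B t). pose proof (Rabs_pos K). nra.
Qed.

Lemma ev_sign n : forall l, (length l <= n)%nat -> (forall p, In p l -> 0 <= snd p) ->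
  exists s, 0 <= s /\ ((forall t, s < t -> 0 <= Esum l t) \/ (forall t, s < t -> Esum l t <= 0)).
Proof.
  induction n; intros l Hl Hpos.
  - destruct l; simpl in Hl; [|lia]. exists 0; split; [lra|]. left; intros; simpl; lra.
  - destruct (Rle_dec (maxb l) 0) as [HB|HB].
    { exists 0; split; [lra|]. left; intros. rewrite Esum_zero; [lra|].
      intros p Hp. pose proof (maxb_ge l p Hp). lra. }
    set (B := maxb l) in *.
    assert (Hne : l <> nil) by (intro; subst; simpl in HB; unfold B in HB; simpl in HB; lra).
    destruct (maxb_att l Hne Hpos) as [p0 [Hp0 Hp0B]].
    set (f := fun p : R*R => if Req_dec_T (snd p) B then true else false).
    set (l1 := filter f l). set (l2 := filter (fun x => negb (f x)) l).
    assert (Hsplit : forall t, Esum l t = csum l1 * rpow B t + Esum l2 t).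
    { intros t. rewrite (Esum_filter f). fold l1 l2. rewrite (Esum_const l1 t B); auto.
      intros p Hp. unfold l1 in Hp. apply filter_In in Hp. destruct Hp as [_ Hp].
      unfold f in Hp. destruct (Req_dec_T (snd p) B); congruence. }
    assert (Hl2 : (length l2 <= n)%nat).
    { pose proof (filter_length f l). fold l1 l2 in H.
      assert (In p0 l1). { apply filter_In. split; auto. unfold f. destruct (Req_dec_T (snd p0) B); [reflexivity|]. exfalso; apply n0; rewrite Hp0B; reflexivity. }
      destruct l1; [contradiction|]. simpl in H. lia. }
    assert (Hl2b : forall p, In p l2 -> 0 <= snd p < B).
    { intros p Hp. unfold l2 in Hp. apply filter_In in Hp. destruct Hp as [Hp Hf].
      unfold f in Hf. destruct (Req_dec_T (snd p) B); simpl in Hf; [congruence|].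
      pose proof (maxb_ge l p Hp). pose proof (Hpos p Hp). fold B in H. split; lra. }
    destruct (Req_dec_T (csum l1) 0) as [HK|HK].
    + destruct (IHn l2 Hl2) as [s [Hs H]]. { intros; apply Hl2b; auto. }
      exists s; split; auto. destruct H as [H|H]; [left|right]; intros t Ht; rewrite Hsplit, HK; specialize (H t Ht); lra.
    + assert (Hb' : 0 <= maxb l2 < B).
      { split; [apply maxb_nonneg|]. destruct l2 as [|q l2'] eqn:E.
        - simpl. lra.
        - rewrite <- E in *. destruct (maxb_att l2) as [p [Hp Hp2]]. rewrite E; congruence.
          intros; apply Hl2b; auto. rewrite <- Hp2. apply Hl2b; auto. }
      destruct (exp_dom (acsum l2) (csum l1) (maxb l2) B (acsum_nonneg l2) HK Hb') as [s [Hs H]].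
      exists s; split; auto.
      assert (Hb2 : forall t, 0 < t -> Rabs (Esum l2 t) <= acsum l2 * rpow (maxb l2) t).
      { intros. apply Esum_bound; auto. intros p Hp. pose proof (Hl2b p Hp).
        split; [lra|]. apply maxb_ge; auto. }
      destruct (Rlt_dec 0 (csum l1)).
      * left. intros t Ht. rewrite Hsplit. specialize (H t Ht). specialize (Hb2 t ltac:(lra)).
        rewrite Rabs_right in H by lra.
        pose proof (Rle_abs (- Esum l2 t)) as H0. rewrite Rabs_Ropp in H0. lra.
      * right. intros t Ht. rewrite Hsplit. specialize (H t Ht). specialize (Hb2 t ltac:(lra)).
        rewrite Rabs_left in H by lra. pose proof (Rle_abs (Esum l2 t)). lra.
Qed.
Fixpoint cntf (f : nat -> R) (N : nat) (v : R) : nat :=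
  match N with O => O | S k => (cntf f k v + if Req_dec_T (f k) v then 1 else 0)%nat end.

Definition lsum (h : R -> R) (l : list R) : R := fold_right (fun v acc => h v + acc) 0 l.

Lemma lsum_ext h1 h2 l : (forall v, In v l -> h1 v = h2 v) -> lsum h1 l = lsum h2 l.
Proof. induction l; simpl; intros; auto. rewrite H, IHl; auto. Qed.
Lemma lsum_plus h1 h2 l : lsum (fun v => h1 v + h2 v) l = lsum h1 l + lsum h2 l.
Proof. induction l; simpl; [lra|]. rewrite IHl; lra. Qed.
Lemma lsum_le h1 h2 l : (forall v, In v l -> h1 v <= h2 v) -> lsum h1 l <= lsum h2 l.
Proof. induction l; simpl; intros; [lra|]. pose proof (H a (or_introl eq_refl)). pose proof (IHl (fun v Hv => H v (or_intror Hv))). lra. Qed.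

Lemma lsum_ind_out (g : R -> R) w l : ~ In w l -> lsum (fun v => (if Req_dec_T w v then 1 else 0) * g v) l = 0.
Proof. induction l; simpl; intros; [lra|]. destruct (Req_dec_T w a). subst; tauto. rewrite IHl; [lra|tauto]. Qed.
Lemma lsum_ind (g : R -> R) w l : NoDup l -> In w l -> lsum (fun v => (if Req_dec_T w v then 1 else 0) * g v) l = g w.
Proof.
  induction l; simpl; intros Hd Hw; [contradiction|]. inversion Hd; subst.
  destruct (Req_dec_T w a).
  - subst. rewrite lsum_ind_out by auto. lra.
  - destruct Hw; [congruence|]. rewrite IHl; auto. lra.
Qed.

Lemma key (g : R -> R) f N L : NoDup L -> (forall n, (n < N)%nat -> In (f n) L) ->
  rsum (fun n => g (f n)) N = lsum (fun v => INR (cntf f N v) * g v) L.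
Proof.
  intros Hd. induction N; intros HL; simpl.
  - clear HL. induction L; simpl; auto. inversion Hd; subst. simpl in IHL. rewrite <- IHL by auto. lra.
  - rewrite IHN by (intros; apply HL; lia).
    rewrite <- (lsum_ind g (f N) L Hd (HL N ltac:(lia))). rewrite <- lsum_plus.
    apply lsum_ext. intros v _. rewrite plus_INR.
    destruct (Req_dec_T (f N) v); simpl; lra.
Qed.

Lemma dickson_aux n : forall (J : list R) (T : Type) (C : T -> Prop) (f : T -> R -> nat),
  (length J < n)%nat ->
  exists X, (forall x, In x X -> C x) /\
    (forall c, C c -> exists x, In x X /\ forall j, In j J -> (f x j <= f c j)%nat).
Proof.
  induction n; intros J T C f HJ; [lia|].
  assert (Hsl : forall l : list (R*nat), (forall p, In p l -> In (fst p) J) ->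
    exists X, (forall x, In x X -> C x) /\ forall p, In p l -> forall c, C c -> f c (fst p) = snd p ->
      exists x, In x X /\ forall j, In j J -> (f x j <= f c j)%nat).
  { induction l as [|[j v] l IHl]; intros Hl.
    - exists nil; split; [intros x []|intros p []].
    - destruct IHl as [X2 [HX2 HX2']]. { intros; apply Hl; right; auto. }
      destruct (IHn (remove Req_dec_T j J) T (fun c => C c /\ f c j = v) f) as [X1 [HX1 HX1']].
      { pose proof (remove_length_lt Req_dec_T J j (Hl (j,v) (or_introl eq_refl))). simpl in H. lia. }
      exists (X1 ++ X2). split.
      + intros x Hx. apply in_app_or in Hx. destruct Hx; [apply HX1; auto|apply HX2; auto].
      + intros p Hp c Hc Hfc. destruct Hp as [Hp|Hp].
        * subst p. simpl in Hfc. destruct (HX1' c (conj Hc Hfc)) as [x [Hx Hdom]].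
          exists x; split; [apply in_or_app; left; auto|]. intros j' Hj'.
          destruct (Req_dec_T j' j).
          -- subst. destruct (HX1 x Hx). lia.
          -- apply Hdom. apply in_in_remove; auto.
        * destruct (HX2' p Hp c Hc Hfc) as [x [Hx Hdom]]. exists x; split; auto. apply in_or_app; right; auto. }
  destruct (classic (exists c0, C c0)) as [[c0 Hc0]|Hno].
  2:{ exists nil. split; [intros x []|]. intros c Hc; exfalso; eauto. }
  destruct (Hsl (flat_map (fun j => map (fun v => (j,v)) (seq 0 (f c0 j))) J)) as [X [HX HX']].
  { intros p Hp. apply in_flat_map in Hp. destruct Hp as [j [Hj Hp]]. apply in_map_iff in Hp.
    destruct Hp as [v [<- _]]. auto. }
  exists (c0 :: X). split.
  - intros x [<-|Hx]; auto.
  - intros c Hc. destruct (classic (forall j, In j J -> (f c0 j <= f c j)%nat)) as [Hall|Hnot].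
    + exists c0; split; [left; auto|auto].
    + apply not_all_ex_not in Hnot. destruct Hnot as [j Hj].
      apply imply_to_and in Hj. destruct Hj as [Hj Hlt].
      destruct (HX' (j, f c j)) with (c := c) as [x [Hx Hdom]]; auto.
      * apply in_flat_map. exists j; split; auto. apply in_map_iff. exists (f c j); split; auto.
        apply in_seq. lia.
      * exists x; split; [right; auto|auto].
Qed.

Lemma dickson (J : list R) (T : Type) (C : T -> Prop) (f : T -> R -> nat) :
  exists X, (forall x, In x X -> C x) /\
    (forall c, C c -> exists x, In x X /\ forall j, In j J -> (f x j <= f c j)%nat).
Proof. apply (dickson_aux (S (length J))). lia. Qed.

Lemma ev_min {T : Type} (P : T -> Prop) (r : R -> T -> T -> Prop)
  (Htot : forall x y, P x -> P y -> exists s, (forall t, s < t -> r t x y) \/ (forall t, s < t -> r t y x))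
  (Htr : forall t x y z, r t x y -> r t y z -> r t x z) (Hrf : forall t x, r t x x) :
  forall l, l <> nil -> (forall x, In x l -> P x) ->
  exists x0 s, In x0 l /\ forall t, s < t -> forall y, In y l -> r t x0 y.
Proof.
  induction l as [|y l IH]; intros Hn HP; [congruence|].
  destruct l as [|y' l'].
  - exists y, 0. split; [left; auto|]. intros t _ z [<-|[]]; auto.
  - destruct IH as [x1 [s1 [Hx1 H1]]]. congruence. intros; apply HP; right; auto.
    destruct (Htot y x1) as [s2 [H2|H2]]. apply HP; left; auto. apply HP; right; auto.
    + exists y, (Rmax s1 s2). split; [left; auto|]. intros t Ht z [<-|Hz]; auto.
      apply Htr with x1. apply H2. eapply Rle_lt_trans; [apply Rmax_r|eauto].
      apply H1; auto. eapply Rle_lt_trans; [apply Rmax_l|eauto].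
    + exists x1, (Rmax s1 s2). split; [right; auto|]. intros t Ht z [<-|Hz].
      apply H2. eapply Rle_lt_trans; [apply Rmax_r|eauto].
      apply H1; auto. eapply Rle_lt_trans; [apply Rmax_l|eauto].
Qed.

Lemma argmin {T : Type} (g : T -> R) : forall l, l <> nil -> exists x, In x l /\ forall y, In y l -> g x <= g y.
Proof.
  induction l as [|y l IH]; intros Hn; [congruence|].
  destruct l as [|y' l'].
  - exists y; split; [left; auto|]. intros z [<-|[]]; lra.
  - destruct IH as [x1 [Hx1 H1]]. congruence.
    destruct (Rle_dec (g y) (g x1)).
    + exists y; split; [left; auto|]. intros z [<-|Hz]; [lra|]. specialize (H1 z Hz); lra.
    + exists x1; split; [right; auto|]. intros z [<-|Hz]; [lra|auto].
Qed.
Lemma rsum_nonneg f N : (forall n, 0 <= f n) -> 0 <= rsum f N.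
Proof. intros H; induction N; simpl; [lra|]. specialize (H N); lra. Qed.

Lemma Esum_map (c1 c2 : R -> R) L t : Esum (map (fun v => (c1 v - c2 v, Rabs v)) L) t =
  lsum (fun v => c1 v * rpow (Rabs v) t) L - lsum (fun v => c2 v * rpow (Rabs v) t) L.
Proof. induction L; simpl; [lra|]. rewrite IHL. lra. Qed.

Theorem mainTheorem9 (G : AbGroup) (phi : G -> R) (alpha : G) (a : R)
  (Hphi : is_height G phi) (Ha : 0 <= a)
  (S : G -> Prop) (HSe : S (gid G))
  (HSfin : exists l : list R, forall s, S s -> In (phi s) l)
  (Hrep : forall t, a < t -> replaces G phi S t alpha) :
  (exists (s : R) (M : nat -> R) (NM : nat),
     a <= s /\ (forall n, (NM <= n)%nat -> M n = 0) /\
     forall t, s < t -> phi_t G phi t alpha = lp_norm t M NM) /\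
  (exists X : list ((nat -> R) * nat),
     (forall x, In x X -> forall n, (snd x <= n)%nat -> fst x n = 0) /\
     forall t, a < t ->
       exists x, In x X /\ phi_t G phi t alpha = lp_norm t (fst x) (snd x) /\
         forall y, In y X -> lp_norm t (fst x) (snd x) <= lp_norm t (fst y) (snd y)).
Proof.
  destruct HSfin as [L HL].
  set (L' := nodup Req_dec_T L).
  set (Cd := fun d : (nat -> G) * nat => (forall n, S (fst d n)) /\
         (forall n, (snd d <= n)%nat -> fst d n = gid G) /\ gprod G (fst d) (snd d) = alpha).
  set (fd := fun (d : (nat -> G) * nat) v => cntf (fun n => phi (fst d n)) (snd d) v).
  set (nrm := fun t (d : (nat -> G) * nat) => lp_norm t (fun n => phi (fst d n)) (snd d)).
  set (inner := fun t (d : (nat -> G) * nat) => rsum (fun n => rpow (Rabs (phi (fst d n))) t) (snd d)).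
  assert (Hnrm : forall t d, nrm t d = rpow (inner t d) (1 / t)) by reflexivity.
  assert (Hinner_nn : forall t d, 0 <= inner t d) by (intros; apply rsum_nonneg; intros; apply rpow_nonneg).
  assert (Hin : forall t d, Cd d -> inner t d = lsum (fun v => INR (fd d v) * rpow (Rabs v) t) L').
  { intros t d Hd. unfold inner, fd.
    apply (key (fun v => rpow (Rabs v) t) (fun n => phi (fst d n)) (snd d) L').
    apply NoDup_nodup. intros n _. apply nodup_In. apply HL. apply Hd. }
  assert (Hmono : forall t x y, 0 < t -> inner t x <= inner t y -> nrm t x <= nrm t y).
  { intros t x y Ht H. rewrite !Hnrm. apply rpow_le_base. split; auto.
    unfold Rdiv; rewrite Rmult_1_l; apply Rinv_0_lt_compat; auto. }
  assert (Hdom : forall t x c, 0 < t -> Cd x -> Cd c -> (forall j, In j L' -> (fd x j <= fd c j)%nat) ->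
            nrm t x <= nrm t c).
  { intros t x c Ht Hx Hc Hj. apply Hmono; auto. rewrite (Hin t x Hx), (Hin t c Hc).
    apply lsum_le. intros v Hv. apply Rmult_le_compat_r. apply rpow_nonneg. apply le_INR; auto. }
  assert (Hcmp : forall x y, Cd x -> Cd y -> exists s,
            (forall t, s < t -> nrm t x <= nrm t y) \/ (forall t, s < t -> nrm t y <= nrm t x)).
  { intros x y Hx Hy.
    set (l := map (fun v => (INR (fd y v) - INR (fd x v), Rabs v)) L').
    destruct (ev_sign (length l) l (le_n _)) as [s [Hs H]].
    { intros p Hp. unfold l in Hp. apply in_map_iff in Hp. destruct Hp as [v [<- _]]. apply Rabs_pos. }
    exists s. destruct H as [H|H]; [left|right]; intros t Ht; specialize (H t Ht);
      unfold l in H; rewrite Esum_map in H; rewrite <- (Hin t x Hx), <- (Hin t y Hy) in H;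
      apply Hmono; lra. }
  destruct (dickson L' _ Cd fd) as [Xd [HXd HXd']].
  assert (Hex : exists d, Cd d).
  { destruct (Hrep (a + 1) ltac:(lra)) as [Hlb Hgr].
    apply NNPP. intro Hno. set (m := phi_t G phi (a+1) alpha) in *.
    assert (m + 1 <= m). { apply Hgr. intros v [a0 [N [H1 [H2 [H3 _]]]]]. exfalso. apply Hno.
      exists (a0, N). split; auto. }
    lra. }
  assert (HXne : Xd <> nil).
  { destruct Hex as [d Hd]. destruct (HXd' d Hd) as [x [Hx _]]. intro E; rewrite E in Hx; destruct Hx. }
  assert (Hchar : forall t, a < t -> forall x0, In x0 Xd -> (forall y, In y Xd -> nrm t x0 <= nrm t y) ->
            phi_t G phi t alpha = nrm t x0).
  { intros t Ht x0 Hx0 Hmin. destruct (Hrep t Ht) as [Hlb Hgr]. apply Rle_antisym.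
    - apply Hlb. destruct (HXd x0 Hx0) as [H1 [H2 H3]].
      exists (fst x0), (snd x0). repeat split; auto.
    - apply Hgr. intros v [a0 [N [H1 [H2 [H3 ->]]]]].
      assert (Hd : Cd (a0, N)) by (repeat split; auto).
      destruct (HXd' _ Hd) as [y [Hy Hdy]].
      eapply Rle_trans; [apply Hmin; eauto|].
      apply (Hdom t y (a0, N)); auto; lra. }
  assert (Hzero : forall d, Cd d -> forall n, (snd d <= n)%nat -> phi (fst d n) = 0).
  { intros d Hd n Hn. destruct Hd as [_ [H2 _]]. rewrite H2 by auto. apply Hphi. }
  split.
  - assert (Htot : forall x y, In x Xd -> In y Xd -> exists s,
            (forall t, s < t -> nrm t x <= nrm t y) \/ (forall t, s < t -> nrm t y <= nrm t x)).
    { intros x y Hx Hy. apply Hcmp; apply HXd; auto. }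
    destruct (ev_min (fun d => In d Xd) (fun t x y => nrm t x <= nrm t y) Htot
      ltac:(intros; lra) ltac:(intros; lra) Xd HXne ltac:(auto))
      as [x0 [s0 [Hx0 Hmin]]].
    { exists (Rmax a s0), (fun n => phi (fst x0 n)), (snd x0). split; [apply Rmax_l|]. split.
      * apply Hzero; auto.
      * intros t Ht. apply (Hchar t). eapply Rle_lt_trans; [apply Rmax_l|eauto]. auto.
        apply Hmin. eapply Rle_lt_trans; [apply Rmax_r|eauto]. }
  - exists (map (fun d => ((fun n => phi (fst d n)), snd d)) Xd). split.
    + intros x Hx. apply in_map_iff in Hx. destruct Hx as [d [<- Hd]]. simpl. apply Hzero; auto.
    + intros t Ht. destruct (argmin (nrm t) Xd HXne) as [x0 [Hx0 Hmin]].
      exists ((fun n => phi (fst x0 n)), snd x0). split; [apply in_map_iff; eauto|]. split.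
      * apply (Hchar t Ht x0 Hx0 Hmin).
      * intros y Hy. apply in_map_iff in Hy. destruct Hy as [d [<- Hd]]. simpl. apply (Hmin d Hd).
Qed.
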